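(* Let $S$ be a left adequate semigroup with an adequate transversal $S^0$. Then for all $x\in S$, $f_x=f_{\bar x}$, and so $x=e_x\bar x$.
   Context: For a semigroup $S$, $\mathcal{R}^\ast=\{(a,b): \text{for all } x,y\in S^1,\ xa=ya \iff xb=yb\}$ and $\mathcal{L}^\ast$ is defined dually. $S$ is abundant if every $\mathcal{R}^\ast$-class and every $\mathcal{L}^\ast$-class contains an idempotent; adequate if abundant and its idempotents commute; left adequate if abundant and every $\mathcal{R}^\ast$-class contains a unique idempotent. In an adequate semigroup $a^+,a^\ast$ denote the unique idempotents in the $\mathcal{R}^\ast$-, resp. $\mathcal{L}^\ast$-class of $a$. A subsemigroup $U$ of abundant $S$ is a $\ast$-subsemigroup if $U$ is abundant and $\mathcal{L}^\ast_U=\mathcal{L}^\ast_S\cap(U\times U)$, $\mathcal{R}^\ast_U=\mathcal{R}^\ast_S\cap(U\times U)$. An adequate $\ast$-subsemigroup $S^0$ of abundant $S$ is an adequate transversal if for each $x\in S$ there is a unique $\bar x\in S^0$ and idempotents $e,f$ of $S$ with $x=e\bar xf$, $e\,\mathcal{L}\,\bar x^+$, $f\,\mathcal{R}\,\bar x^\ast$; these $e,f$ are uniquely determined and denoted $e_x,f_x$. *)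

(* Defs.v *)
Set Implicit Arguments.

Section Semigroups.
Variable T : Type.
Variable mul : T -> T -> T.

Definition associative_op : Prop :=
  forall a b c, mul a (mul b c) = mul (mul a b) c.

Definition idempotent (e : T) : Prop := mul e e = e.

(* S^1 is modelled as [option T]: [None] is the adjoined identity. *)
Definition lmul1 (x : option T) (a : T) : T :=
  match x with None => a | Some u => mul u a end.
Definition rmul1 (a : T) (x : option T) : T :=
  match x with None => a | Some u => mul a u end.

Definition in1 (U : T -> Prop) (x : option T) : Prop :=
  match x with None => True | Some u => U u end.

Definition RstarIn (U : T -> Prop) (a b : T) : Prop :=
  forall x y, in1 U x -> in1 U y ->
    (lmul1 x a = lmul1 y a <-> lmul1 x b = lmul1 y b).
Definition LstarIn (U : T -> Prop) (a b : T) : Prop :=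
  forall x y, in1 U x -> in1 U y ->
    (rmul1 a x = rmul1 a y <-> rmul1 b x = rmul1 b y).

Definition allS : T -> Prop := fun _ => True.
Definition Rstar := RstarIn allS.
Definition Lstar := LstarIn allS.

Definition GreenL (a b : T) : Prop :=
  exists x y : option T, a = lmul1 x b /\ b = lmul1 y a.
Definition GreenR (a b : T) : Prop :=
  exists x y : option T, a = rmul1 b x /\ b = rmul1 a y.

Definition subsemigroup (U : T -> Prop) : Prop :=
  forall a b, U a -> U b -> U (mul a b).

Definition abundantIn (U : T -> Prop) : Prop :=
  (forall a, U a -> exists e, U e /\ idempotent e /\ RstarIn U a e) /\
  (forall a, U a -> exists e, U e /\ idempotent e /\ LstarIn U a e).

Definition abundant : Prop := abundantIn allS.

Definition adequateIn (U : T -> Prop) : Prop :=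
  abundantIn U /\
  forall e f, U e -> U f -> idempotent e -> idempotent f -> mul e f = mul f e.

Definition left_adequate : Prop :=
  abundant /\
  forall a e f, idempotent e -> idempotent f -> Rstar a e -> Rstar a f -> e = f.

Definition star_subsemigroup (U : T -> Prop) : Prop :=
  subsemigroup U /\ abundantIn U /\
  (forall a b, U a -> U b -> (LstarIn U a b <-> Lstar a b)) /\
  (forall a b, U a -> U b -> (RstarIn U a b <-> Rstar a b)).

Definition is_plus (U : T -> Prop) (a e : T) : Prop :=
  U e /\ idempotent e /\ RstarIn U a e.
Definition is_star (U : T -> Prop) (a e : T) : Prop :=
  U e /\ idempotent e /\ LstarIn U a e.

Definition decomp (U : T -> Prop) (x xb e f : T) : Prop :=
  U xb /\ idempotent e /\ idempotent f /\ x = mul (mul e xb) f /\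
  (exists p, is_plus U xb p /\ GreenL e p) /\
  (exists s, is_star U xb s /\ GreenR f s).

Definition adequate_transversal (U : T -> Prop) : Prop :=
  adequateIn U /\ star_subsemigroup U /\
  forall x, exists xb, (exists e f, decomp U x xb e f) /\
    forall xb', (exists e f, decomp U x xb' e f) -> xb' = xb.

End Semigroups.

(* Main.v *)
Require Import Defs.

Lemma lr_assoc (T : Type) (mul : T -> T -> T) : associative_op mul ->
  forall u a y, lmul1 mul u (rmul1 mul a y) = rmul1 mul (lmul1 mul u a) y.
Proof. intros A [u|] a [y|]; simpl; auto. Qed.

Lemma R_Rstar (T : Type) (mul : T -> T -> T) : associative_op mul ->
  forall a b, GreenR mul a b -> Rstar mul a b.
Proof.
  intros A a b [x [y [Ha Hb]]] u v _ _. split; intro H.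
  - rewrite Hb, !lr_assoc, H by exact A; reflexivity.
  - rewrite Ha, !lr_assoc, H by exact A; reflexivity.
Qed.

Theorem corollary2p2 (T : Type) (mul : T -> T -> T) (S0 : T -> Prop) :
  associative_op mul ->
  left_adequate mul ->
  adequate_transversal mul S0 ->
  forall x xb ex fx, decomp mul S0 x xb ex fx ->
  forall xbb exb fxb, decomp mul S0 xb xbb exb fxb ->
  fx = fxb /\ x = mul ex xb.
Proof.
  intros A [_ LA] [[_ Comm] [_ Uniq]] x xb ex fx
    [Uxb [Iex [Ifx [Hx [[p [[Up [Ip Rp]] Gp]] [s [[Us [Is Ls]] Gs]]]]]]]
    xbb exb fxb
    [Uxbb [Iexb [Ifxb [Hxb [[p' [[Up' [Ip' Rp']] Gp']] [s' [[Us' [Is' Ls']] Gs']]]]]]].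
  assert (Hpxb : mul p xb = xb).
  { pose proof (proj2 (Rp (Some p) None Up I)) as H. simpl in H. apply H. exact Ip. }
  assert (Hxbs : mul xb s = xb).
  { pose proof (proj2 (Ls (Some s) None Us I)) as H. simpl in H. apply H. exact Is. }
  assert (Dxb : decomp mul S0 xb xb p s).
  { split; [exact Uxb|]. split; [exact Ip|]. split; [exact Is|].
    split; [rewrite Hpxb, Hxbs; reflexivity|]. split.
    - exists p. split. { split; [exact Up|split; [exact Ip|exact Rp]]. } exists None; exists None; simpl; auto.
    - exists s. split. { split; [exact Us|split; [exact Is|exact Ls]]. } exists None; exists None; simpl; auto. }
  destruct (Uniq xb) as [x0 [_ U0]].
  assert (E1 : xb = x0) by (apply U0; exists p, s; exact Dxb).
  assert (E2 : xbb = x0).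
  { apply U0; exists exb, fxb. split; [exact Uxbb|]. split; [exact Iexb|]. split; [exact Ifxb|].
    split; [exact Hxb|]. split.
    - exists p'. split; [split; [exact Up'|split; [exact Ip'|exact Rp']]|exact Gp'].
    - exists s'. split; [split; [exact Us'|split; [exact Is'|exact Ls']]|exact Gs']. }
  subst x0. subst xbb.
  assert (H1 : mul s s' = s).
  { assert (Hs' : mul xb s' = xb).
    { pose proof (proj2 (Ls' (Some s') None Us' I)) as H. simpl in H. apply H. exact Is'. }
    pose proof (proj1 (Ls (Some s') None Us' I)) as H. simpl in H. apply H. exact Hs'. }
  assert (H2 : mul s' s = s').
  { pose proof (proj1 (Ls' (Some s) None Us I)) as H. simpl in H. apply H. exact Hxbs. }
  assert (Ess : s = s') by (rewrite <- H1; transitivity (mul s' s); [apply Comm; auto | exact H2]).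
  subst s'.
  assert (Efx : fx = fxb).
  { apply (LA s fx fxb Ifx Ifxb).
    - intros u v Hu Hv. pose proof (@R_Rstar _ mul A _ _ Gs u v Hu Hv). tauto.
    - intros u v Hu Hv. pose proof (@R_Rstar _ mul A _ _ Gs' u v Hu Hv). tauto. }
  subst fxb. split; [reflexivity|].
  assert (Hf : mul xb fx = xb).
  { transitivity (mul (mul (mul exb xb) fx) fx); [f_equal; exact Hxb|]. rewrite <- A, Ifx. symmetry; exact Hxb. }
  rewrite Hx, <- A, Hf. reflexivity.
Qed.
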